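(* Fix $1<p<2$. There exist solutions $g,h$ on $[0,\infty)$ of the system (S) described in the context such that $g(0)+2(3-p)h(0)<0$, $h>0$ and $\frac{dg}{dt}+h>0$ on all of $[0,\infty)$, and, as $r\to\infty$ (where $t=w_s(r)$), \[ g=-r-\frac{4}{3-p}+O(r^{-1}),\qquad h=\frac{r}{3-p}+1+O(r^{-1}). \]
   Context: Mass 2 spatial Schwarzschild: $(\mathbb{R}^3\setminus B_1(0),g_s=(1+1/r)^4\delta_{ij})$, $r=|x|$. Let $u_s$ be the radial solution of $\operatorname{div}_{g_s}(|\nabla u_s|^{p-2}\nabla u_s)=0$ with $u_s=1$ at $r=1$, $u_s\to0$ as $r\to\infty$; $w_s=(1-p)\log u_s$, and $r\mapsto t=w_s(r)$ is an increasing bijection $[1,\infty)\to[0,\infty)$ used to regard functions of $t$ as functions of $r$. $W_s(t)=\int_{\{w_s=t\}}|\nabla w_s|_{g_s}^2\,da_{g_s}$. System (S) for functions $g,h$ of $t$: $\left(\frac{dg}{dt}+h\right)W_s^2+\left(g-2(p-2)h+(p-1)(3-p)\frac{dh}{dt}\right)W_s\frac{dW_s}{dt}+\frac{(p-1)(5-p)}{4}h\left(\frac{dW_s}{dt}\right)^2=0$ and $\left(\frac{dg}{dt}+h\right)W_s^2-\frac{(p-1)(5-p)}{4}h\left(\frac{dW_s}{dt}\right)^2=0$. *)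

(* Defs.v *)
From Stdlib Require Import Reals.
Open Scope R_scope.

(* Derivative of f at x relative to the set D (two-sided at interior points,
   one-sided at an endpoint such as 0 of [0,oo) or 1 of [1,oo)). *)
Definition deriv_within (D : R -> Prop) (f : R -> R) (x l : R) : Prop :=
  forall eps, 0 < eps -> exists delta, 0 < delta /\
    forall y, D y -> y <> x -> Rabs (y - x) < delta ->
      Rabs ((f y - f x) / (y - x) - l) < eps.

(* Mass 2 spatial Schwarzschild: g_s = phi_s^4 delta, phi_s = 1 + 1/r. *)
Definition phi_s (r : R) : R := 1 + 1 / r.

Definition sphere_area_s (r : R) : R := 4 * PI * r ^ 2 * phi_s r ^ 4.

Definition grad_norm_s (r dfdr : R) : R := Rabs dfdr / phi_s r ^ 2.

(* g_s-flux through {|x|=r} of |grad u|^{p-2} grad u, for radial u with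
   u' = du:  (|grad u|^{p-2} * d_nu u) * area. *)
Definition plap_flux_s (p : R) (du : R -> R) (r : R) : R :=
  Rpower (grad_norm_s r (du r)) (p - 2) * (du r / phi_s r ^ 2) * sphere_area_s r.

(* u (with derivative du in r) is the radial solution on [1,oo) of
   div_{g_s}(|grad u|^{p-2} grad u) = 0 (for radial u: the flux through
   coordinate spheres has zero r-derivative), u = 1 at r = 1, u -> 0 at oo. *)
Definition is_radial_plap_solution (p : R) (u du : R -> R) : Prop :=
  (forall r, 1 <= r -> deriv_within (fun s => 1 <= s) u r (du r)) /\
  (forall r, 1 <= r -> deriv_within (fun s => 1 <= s) (plap_flux_s p du) r 0) /\
  u 1 = 1 /\
  (forall eps, 0 < eps -> exists M, forall r, M <= r -> Rabs (u r) < eps).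

Definition w_of (p : R) (u : R -> R) (r : R) : R := (1 - p) * ln (u r).
Definition dw_of (p : R) (u du : R -> R) (r : R) : R := (1 - p) * du r / u r.

(* W_s(t) = int_{w_s = t} |grad w_s|^2 da, where rho t is the radius with
   w_s(rho t) = t (the level set is the coordinate sphere of that radius). *)
Definition W_of (p : R) (u du rho : R -> R) (t : R) : R :=
  grad_norm_s (rho t) (dw_of p u du (rho t)) ^ 2 * sphere_area_s (rho t).

Definition systemS (p W dW g dg h dh : R) : Prop :=
  (dg + h) * W ^ 2
    + (g - 2 * (p - 2) * h + (p - 1) * (3 - p) * dh) * W * dW
    + (p - 1) * (5 - p) / 4 * h * dW ^ 2 = 0 /\
  (dg + h) * W ^ 2 - (p - 1) * (5 - p) / 4 * h * dW ^ 2 = 0.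

(* Main.v *)
Require Import Defs.
From Stdlib Require Import Reals Lra.
From Coquelicot Require Import Coquelicot.
Open Scope R_scope.

Lemma isd_within D f x l : is_derive f x l -> deriv_within D f x l.
Proof.
  intros H eps Heps. apply is_derive_Reals in H.
  destruct (H eps Heps) as [d Hd]. exists d. split; [apply cond_pos|].
  intros y _ Hyx Hy. specialize (Hd (y - x)).
  replace (x + (y - x)) with y in Hd by ring.
  apply Hd; [intro; apply Hyx; lra | exact Hy].
Qed.

Lemma dw_ext D f g x l : (forall y, D y -> f y = g y) -> D x ->
  deriv_within D f x l -> deriv_within D g x l.
Proof.
  intros He Dx H eps Heps. destruct (H eps Heps) as [d [hd Hd]].
  exists d. split; [exact hd|]. intros y Dy Hyx Hy.
  rewrite <- (He y Dy), <- (He x Dx). apply Hd; assumption.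
Qed.

Definition extf (f f' : R -> R) := fun y => if Rle_dec 1 y then f y else f 1 + f' 1 * (y - 1).

Lemma extf_eq f f' y : 1 <= y -> extf f f' y = f y.
Proof. intro h. unfold extf. destruct (Rle_dec 1 y); [reflexivity | lra]. Qed.

Lemma ext_derive (f f' : R -> R) :
  (forall x, 1 <= x -> deriv_within (fun s => 1 <= s) f x (f' x)) ->
  forall x, 1 <= x -> is_derive (extf f f') x (f' x).
Proof.
  intros H x hx. apply is_derive_Reals. intros eps heps.
  destruct (H x hx eps heps) as [d [hd Hd]].
  destruct (Rle_lt_or_eq_dec 1 x hx) as [hlt|heq].
  - assert (hm : 0 < Rmin d (x-1)) by (apply Rmin_pos; lra).
    exists (mkposreal _ hm). intros h hh0 hh. simpl in hh.
    assert (hh1 := Rmin_l d (x-1)). assert (hh2 := Rmin_r d (x-1)).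
    apply Rabs_def2 in hh. destruct hh as [ha hb].
    rewrite !extf_eq by lra.
    specialize (Hd (x+h)). replace (x + h - x) with h in Hd by ring.
    apply Hd; [lra | intro; apply hh0; lra | apply Rabs_def1; lra].
  - subst x. exists (mkposreal d hd). intros h hh0 hh. simpl in hh.
    unfold extf. destruct (Rle_dec 1 (1+h)) as [h1|h1]; destruct (Rle_dec 1 1) as [h2|h2]; try lra.
    + specialize (Hd (1+h)). replace (1 + h - 1) with h in Hd by ring.
      apply Hd; [lra | intro; apply hh0; lra | exact hh].
    + replace ((f 1 + f' 1 * (1 + h - 1) - f 1) / h - f' 1) with 0 by (field; exact hh0).
      rewrite Rabs_R0. exact heps.
Qed.

Lemma mvt (f f' : R -> R) a b : a < b ->
  (forall x, a <= x <= b -> is_derive f x (f' x)) ->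
  exists c, a <= c <= b /\ f b - f a = f' c * (b - a).
Proof.
  intros hab H. assert (HM := MVT_gen f a b f'). cbv zeta in HM.
  rewrite Rmin_left, Rmax_right in HM by lra.
  destruct HM as [c [hc e]].
  - intros x hx. apply H; lra.
  - intros x hx. apply continuity_pt_filterlim. apply (ex_derive_continuous f x).
    exists (f' x). apply H; lra.
  - exists c; split; assumption.
Qed.

Lemma incr_strict f f' a : (forall x, a <= x -> is_derive f x (f' x)) ->
  (forall x, a <= x -> 0 < f' x) -> forall x y, a <= x -> x < y -> f x < f y.
Proof.
  intros H Hp x y hx hxy. destruct (mvt f f' x y hxy) as [c [hc e]].
  - intros z hz. apply H; lra.
  - assert (0 < f' c) by (apply Hp; lra). assert (0 < f' c * (y - x)) by (apply Rmult_lt_0_compat; lra). lra.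
Qed.

Lemma decr_strict f f' a : (forall x, a <= x -> is_derive f x (f' x)) ->
  (forall x, a <= x -> f' x < 0) -> forall x y, a <= x -> x < y -> f y < f x.
Proof.
  intros H Hp x y hx hxy. destruct (mvt f f' x y hxy) as [c [hc e]].
  - intros z hz. apply H; lra.
  - assert (f' c < 0) by (apply Hp; lra). assert (0 < - f' c * (y - x)) by (apply Rmult_lt_0_compat; lra). lra.
Qed.

Lemma nonincr f f' a : (forall x, a <= x -> is_derive f x (f' x)) ->
  (forall x, a <= x -> f' x <= 0) -> forall x y, a <= x -> x <= y -> f y <= f x.
Proof.
  intros H Hp x y hx hxy. destruct (Rle_lt_or_eq_dec x y hxy) as [hlt|heq]; [|subst; lra].
  destruct (mvt f f' x y hlt) as [c [hc e]].
  - intros z hz. apply H; lra.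
  - assert (f' c <= 0) by (apply Hp; lra). assert (0 <= - f' c * (y - x)) by (apply Rmult_le_pos; lra). lra.
Qed.

Lemma nondecr f f' a : (forall x, a <= x -> is_derive f x (f' x)) ->
  (forall x, a <= x -> 0 <= f' x) -> forall x y, a <= x -> x <= y -> f x <= f y.
Proof.
  intros H Hp x y hx hxy. destruct (Rle_lt_or_eq_dec x y hxy) as [hlt|heq]; [|subst; lra].
  destruct (mvt f f' x y hlt) as [c [hc e]].
  - intros z hz. apply H; lra.
  - assert (0 <= f' c) by (apply Hp; lra). assert (0 <= f' c * (y - x)) by (apply Rmult_le_pos; lra). lra.
Qed.

Lemma cmp a Z Z' : (forall y, a <= y -> is_derive Z y (Z' y)) ->
  (forall y, a <= y -> Z' y < 0) ->
  (forall eps, 0 < eps -> exists M, forall y, M <= y -> Rabs (Z y) < eps) -> 0 < Z a.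
Proof.
  intros H Hn Hl. destruct (Rlt_or_le 0 (Z a)) as [h|h]; [exact h|exfalso].
  assert (h1 : Z (a+1) < Z a) by (apply (decr_strict Z Z' a); auto; lra).
  destruct (Hl (Z a - Z (a+1))) as [M HM]; [lra|].
  set (y := Rmax M (a+1)). assert (hy1 := Rmax_l M (a+1)). assert (hy2 := Rmax_r M (a+1)).
  assert (Z y <= Z (a+1)).
  { apply (nonincr Z Z' a); auto; try lra. intros; apply Rlt_le, Hn; auto. }
  specialize (HM y hy1). apply Rabs_def2 in HM. lra.
Qed.

Lemma chain_within (rho f : R -> R) t r' f' :
  (forall y, 0 <= y -> y <> t -> rho y <> rho t) ->
  deriv_within (fun s => 0 <= s) rho t r' -> is_derive f (rho t) f' ->
  deriv_within (fun s => 0 <= s) (fun y => f (rho y)) t (f' * r').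
Proof.
  intros Hinj Hr Hf eps heps. apply is_derive_Reals in Hf.
  set (A := Rabs r' + 1). set (B := Rabs f' + 1).
  assert (hA : 0 < A) by (unfold A; assert (H0 := Rabs_pos r'); lra).
  assert (hB : 0 < B) by (unfold B; assert (H0 := Rabs_pos f'); lra).
  destruct (Hf (eps / (2 * A))) as [d1 Hd1].
  { apply Rdiv_lt_0_compat; lra. }
  destruct (Hr (Rmin 1 (eps / (2 * B)))) as [d2 [hd2 Hd2]].
  { apply Rmin_pos; [lra | apply Rdiv_lt_0_compat; lra]. }
  assert (hd1 := cond_pos d1).
  exists (Rmin d2 (d1 / A)). split.
  { apply Rmin_pos; [lra | apply Rdiv_lt_0_compat; lra]. }
  intros y hy hyt hyd.
  assert (hm1 := Rmin_l d2 (d1 / A)). assert (hm2 := Rmin_r d2 (d1 / A)).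
  assert (hn1 := Rmin_l 1 (eps / (2 * B))). assert (hn2 := Rmin_r 1 (eps / (2 * B))).
  assert (Hq := Hd2 y hy hyt ltac:(lra)).
  set (Qr := (rho y - rho t) / (y - t)) in *.
  assert (hQr : Rabs Qr < A).
  { unfold A. assert (H1 := Rabs_triang_inv Qr r'). lra. }
  assert (hne : rho y - rho t <> 0) by (intro; apply (Hinj y hy hyt); lra).
  assert (hyt' : y - t <> 0) by (intro; apply hyt; lra).
  assert (hdist : Rabs (rho y - rho t) < d1).
  { replace (rho y - rho t) with (Qr * (y - t)) by (unfold Qr; field; exact hyt').
    rewrite Rabs_mult.
    destruct (Req_dec (Rabs Qr) 0) as [e0|e0].
    - rewrite e0. lra.
    - assert (0 < Rabs Qr) by (assert (H0 := Rabs_pos Qr); lra).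
      apply Rle_lt_trans with (A * Rabs (y - t)).
      + apply Rmult_le_compat_r; [apply Rabs_pos | lra].
      + apply Rmult_lt_reg_l with (/ A). apply Rinv_0_lt_compat; lra.
        replace (/ A * (A * Rabs (y - t))) with (Rabs (y - t)) by (field; lra).
        replace (/ A * d1) with (d1 / A) by (unfold Rdiv; ring). lra. }
  specialize (Hd1 (rho y - rho t) hne hdist).
  replace (rho t + (rho y - rho t)) with (rho y) in Hd1 by ring.
  set (Qf := (f (rho y) - f (rho t)) / (rho y - rho t)) in *.
  replace ((f (rho y) - f (rho t)) / (y - t) - f' * r') with
     ((Qf - f') * Qr + f' * (Qr - r')) by (unfold Qf, Qr; field; split; assumption).
  eapply Rle_lt_trans; [apply Rabs_triang|]. rewrite !Rabs_mult.
  assert (e1 : Rabs (Qf - f') * Rabs Qr <= eps / (2 * A) * A).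
  { apply Rmult_le_compat; try apply Rabs_pos; lra. }
  assert (e2 : Rabs f' * Rabs (Qr - r') <= B * (eps / (2 * B))).
  { apply Rmult_le_compat; try apply Rabs_pos; [unfold B; lra | lra]. }
  assert (e3 : Rabs (Qf - f') * Rabs Qr < eps / (2 * A) * A \/ Rabs f' * Rabs (Qr - r') < B * (eps / (2 * B))).
  { destruct (Req_dec (Rabs Qr) 0) as [e0|e0].
    - left. rewrite e0. rewrite Rmult_0_r. apply Rmult_lt_0_compat; [apply Rdiv_lt_0_compat|]; lra.
    - left. apply Rle_lt_trans with (Rabs (Qf - f') * A).
      + apply Rmult_le_compat_l; [apply Rabs_pos | lra].
      + apply Rmult_lt_compat_r; lra. }
  replace (eps / (2 * A) * A) with (eps / 2) in * by (field; lra).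
  replace (B * (eps / (2 * B))) with (eps / 2) in * by (field; lra).
  lra.
Qed.

Lemma inv_within (w w' rho : R -> R) :
  (forall x, 1 <= x -> is_derive w x (w' x)) -> (forall x, 1 <= x -> 0 < w' x) ->
  (forall t, 0 <= t -> 1 <= rho t /\ w (rho t) = t) ->
  forall t, 0 <= t -> deriv_within (fun s => 0 <= s) rho t (/ w' (rho t)).
Proof.
  intros Hw Hp Hr t ht.
  assert (Hinc : forall x y, 1 <= x -> x < y -> w x < w y) by (apply (incr_strict w w' 1); auto).
  assert (Hmon : forall x y, 1 <= x -> x <= y -> w x <= w y).
  { intros x y hx hxy. destruct (Rle_lt_or_eq_dec x y hxy); [apply Rlt_le, Hinc; auto | subst; lra]. }
  destruct (Hr t ht) as [hr1 hrt]. set (r := rho t) in *.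
  assert (Cont : forall eta, 0 < eta -> exists delta, 0 < delta /\ forall y, 0 <= y ->
            Rabs (y - t) < delta -> Rabs (rho y - r) < eta).
  { intros eta heta. set (a := r + eta / 2).
    assert (hda : t < w a) by (rewrite <- hrt; apply Hinc; unfold a; lra).
    destruct (Rle_lt_dec 1 (r - eta / 2)) as [hb|hb].
    - set (b := r - eta / 2) in *.
      assert (hdb : w b < t) by (rewrite <- hrt; apply Hinc; unfold b in *; lra).
      exists (Rmin (w a - t) (t - w b)). split; [apply Rmin_pos; lra|].
      intros y hy hyd. apply Rabs_def2 in hyd. destruct hyd as [hy2 hy3].
      assert (hm1 := Rmin_l (w a - t) (t - w b)). assert (hm2 := Rmin_r (w a - t) (t - w b)).
      destruct (Hr y hy) as [hy1 hwy].
      assert (rho y < a).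
      { destruct (Rlt_or_le (rho y) a) as [hh|hh]; [exact hh|].
        assert (w a <= w (rho y)) by (apply Hmon; unfold a in *; lra). lra. }
      assert (b < rho y).
      { destruct (Rlt_or_le b (rho y)) as [hh|hh]; [exact hh|].
        assert (w (rho y) <= w b) by (apply Hmon; lra). lra. }
      apply Rabs_def1; unfold a, b in *; lra.
    - exists (w a - t). split; [lra|].
      intros y hy hyd. apply Rabs_def2 in hyd. destruct hyd as [hy2 hy3].
      destruct (Hr y hy) as [hy1 hwy].
      assert (rho y < a).
      { destruct (Rlt_or_le (rho y) a) as [hh|hh]; [exact hh|].
        assert (w a <= w (rho y)) by (apply Hmon; unfold a in *; lra). lra. }
      apply Rabs_def1; unfold a in *; lra. }
  intros eps heps. set (d := w' r). assert (hd : 0 < d) by (apply Hp; exact hr1).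
  assert (Hd := Hw r hr1). apply is_derive_Reals in Hd.
  set (e1 := Rmin (d / 2) (eps * d * d / 2)).
  assert (he1 : 0 < e1).
  { apply Rmin_pos; [lra|]. assert (0 < eps * d * d) by (repeat apply Rmult_lt_0_compat; lra). lra. }
  assert (hm1 : e1 <= d / 2) by apply Rmin_l. assert (hm2 : e1 <= eps * d * d / 2) by apply Rmin_r.
  destruct (Hd e1 he1) as [d1 Hd1].
  destruct (Cont d1 (cond_pos d1)) as [delta [hdel Hdel]].
  exists delta. split; [exact hdel|]. intros y hy hyt hyd.
  destruct (Hr y hy) as [hy1 hwy].
  assert (hzr : rho y - r <> 0).
  { intro e. apply hyt. rewrite <- hwy, <- hrt. f_equal. lra. }
  assert (hyt' : y - t <> 0) by (intro; apply hyt; lra).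
  specialize (Hd1 (rho y - r) hzr (Hdel y hy hyd)).
  replace (r + (rho y - r)) with (rho y) in Hd1 by ring.
  rewrite hwy, hrt in Hd1. fold d in Hd1.
  set (Qw := (y - t) / (rho y - r)) in *.
  apply Rabs_def2 in Hd1. destruct Hd1 as [hq1 hq2].
  assert (hQ : d / 2 < Qw) by lra.
  change (rho t) with r. replace ((rho y - r) / (y - t) - / d) with ((d - Qw) / (Qw * d)) by
    (unfold Qw; field; repeat split; try assumption; lra).
  assert (hQd : 0 < Qw * d) by (apply Rmult_lt_0_compat; lra).
  unfold Rdiv. rewrite Rabs_mult, (Rabs_right (/ (Qw * d))) by (apply Rle_ge, Rlt_le, Rinv_0_lt_compat; exact hQd).
  apply Rmult_lt_reg_r with (Qw * d); [exact hQd|].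
  rewrite Rmult_assoc, Rinv_l by lra. rewrite Rmult_1_r.
  assert (Rabs (d - Qw) < eps * d * d / 2) by (apply Rabs_def1; lra).
  assert (eps * d * d / 2 < eps * (Qw * d)).
  { assert (0 < eps * d) by (apply Rmult_lt_0_compat; lra).
    replace (eps * (Qw * d)) with (eps * d * Qw) by ring.
    replace (eps * d * d / 2) with (eps * d * (d / 2)) by field.
    apply Rmult_lt_compat_l; lra. }
  lra.
Qed.

Definition Lf s r := -2*(r+s-1)/(s*r*(r+1)).
Definition Mf s r := -2*(2-s)*(r-1)/(s*r*(r+1)).
Definition Ff (r : R) := 1 - 1/(r*r).
Definition Fpf (r : R) := 2/(r*r*r).
Definition E2f s r := (r+1)*(r+1)/((2-s)*r).
Definition E2pf s r := (1 - 1/(r*r))/(2-s).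
Definition cc s := - s / 2.
Definition qf s (U E : R) := U/(s*E).
Definition qpf s r U E := -1/s - Lf s r * qf s U E.
Definition Zf s r U E := Ff r * qf s U E - E2f s r.
Definition Zpf s r U E := Fpf r * qf s U E + Ff r * qpf s r U E - E2pf s r.
Definition Hf s r U E := Ff r + cc s * E * Zf s r U E.
Definition Hpf s r U E := Fpf r + cc s * (Lf s r * E * Zf s r U E + E * Zpf s r U E).
Definition hf s r U E := qf s U E * Hf s r U E.
Definition hpf s r U E := qpf s r U E * Hf s r U E + qf s U E * Hpf s r U E.
Definition Wf s r U E := 4*PI*r*r/(qf s U E * qf s U E).
Definition Wpf s r U E := 4*PI*(2*r/(qf s U E * qf s U E) - 2*r*r*qpf s r U E/(qf s U E * qf s U E * qf s U E)).
Definition af s r U E := 2/s + Mf s r * qf s U E.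
Definition gf s r U E := 2*(s-1)*hf s r U E - s*(2-s)*qf s U E * hpf s r U E
   - s*(4-s)/2 * af s r U E * hf s r U E.

Definition Ag s k x := 1/s * ln (k / (x^2 * (1 + 1/x)^4)).
Definition Ef s k x := (1 + 1/x)^2 * exp (Ag s k x).

Lemma Ef_pos s k x : 0 < x -> 0 < Ef s k x.
Proof.
  intro hx. unfold Ef. apply Rmult_lt_0_compat; [|apply exp_pos].
  assert (0 < 1 + 1/x) by (assert (0 < 1/x) by (apply Rdiv_lt_0_compat; lra); lra).
  apply pow_lt; lra.
Qed.

Lemma Ag_deriv s k x : 0 < s -> 0 < k -> 0 < x ->
  is_derive (Ag s k) x (1/s * (-2/x + 4/(x*(x+1)))).
Proof.
  intros hs hk hx. unfold Ag.
  assert (h1 : 0 < 1 + 1/x) by (assert (0 < 1/x) by (apply Rdiv_lt_0_compat; lra); lra).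
  assert (h2 : 0 < x^2 * (1 + 1/x)^4) by (apply Rmult_lt_0_compat; apply pow_lt; lra).
  auto_derive.
  - repeat split; try lra. apply Rdiv_lt_0_compat; lra.
  - field. repeat split; try lra.
Qed.

Lemma Ef_deriv s k x : 0 < s -> 0 < k -> 0 < x -> is_derive (Ef s k) x (Lf s x * Ef s k x).
Proof.
  intros hs hk hx. unfold Ef.
  assert (HA := Ag_deriv s k x hs hk hx).
  auto_derive.
  - repeat split; try lra. eexists; exact HA.
  - replace (Derive (fun x => Ag s k x) x) with (1/s * (-2/x + 4/(x*(x+1)))) by (symmetry; apply is_derive_unique; exact HA).
    unfold Lf. field. lra.
Qed.

Ltac unf := unfold gf, af, hpf, hf, Hpf, Hf, Zpf, Zf, qpf, qf, Mf, Lf, Ff, Fpf, E2pf, E2f, cc.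

Lemma core s (U E : R -> R) r (hs : 0 < s < 1) (hr : 1 <= r)
  (HU : is_derive U r (- E r)) (HE : is_derive E r (Lf s r * E r))
  (Upos : 0 < U r) (Epos : 0 < E r) :
  systemS (s+1) (Wf s r (U r) (E r)) (qf s (U r) (E r) * Wpf s r (U r) (E r))
    (gf s r (U r) (E r)) (qf s (U r) (E r) * Derive (fun x => gf s x (U x) (E x)) r)
    (hf s r (U r) (E r)) (qf s (U r) (E r) * hpf s r (U r) (E r)).
Proof.
  set (G := fun x : R => gf s x (U x) (E x)).
  evar (l : R).
  assert (HD : is_derive G r l).
  { unfold G. unf.
    auto_derive.
    - repeat split; try (eexists; eassumption); try nra.
    - subst l; reflexivity. }
  rewrite (is_derive_unique _ _ _ HD). subst l.
  replace (Derive (fun x => U x) r) with (- E r) by (symmetry; apply is_derive_unique; exact HU).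
  replace (Derive (fun x => E x) r) with (Lf s r * E r) by (symmetry; apply is_derive_unique; exact HE).
  unfold systemS, Wf, Wpf. unf.
  assert (PI > 0) by apply PI_RGT_0.
  split; field; repeat split; lra.
Qed.

Lemma g_ex s (U E : R -> R) r (hs : 0 < s < 1) (hr : 1 <= r)
  (HU : is_derive U r (- E r)) (HE : is_derive E r (Lf s r * E r)) (Epos : 0 < E r) :
  is_derive (fun x => gf s x (U x) (E x)) r (Derive (fun x => gf s x (U x) (E x)) r).
Proof.
  apply Derive_correct. unf. auto_derive.
  repeat split; try (eexists; eassumption); try nra.
Qed.

Lemma h_der s (U E : R -> R) r (hs : 0 < s < 1) (hr : 1 <= r)
  (HU : is_derive U r (- E r)) (HE : is_derive E r (Lf s r * E r)) (Epos : 0 < E r) :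
  is_derive (fun x => hf s x (U x) (E x)) r (hpf s r (U r) (E r)).
Proof.
  unfold hf, Hf, Zf, qf, Ff, E2f, cc. auto_derive.
  - repeat split; try (eexists; eassumption); try nra.
  - replace (Derive (fun x => U x) r) with (- E r) by (symmetry; apply is_derive_unique; exact HU).
    replace (Derive (fun x => E x) r) with (Lf s r * E r) by (symmetry; apply is_derive_unique; exact HE).
    unf. field. repeat split; nra.
Qed.

Lemma W_der s (U E : R -> R) r (hs : 0 < s < 1) (hr : 1 <= r)
  (HU : is_derive U r (- E r)) (HE : is_derive E r (Lf s r * E r)) (Upos : 0 < U r) (Epos : 0 < E r) :
  is_derive (fun x => Wf s x (U x) (E x)) r (Wpf s r (U r) (E r)).
Proof.
  unfold Wf, qf. auto_derive.
  - assert (hq : U r * / (s * E r) <> 0) by (apply Rgt_not_eq, Rmult_lt_0_compat; [lra | apply Rinv_0_lt_compat; nra]).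
    repeat split; try (eexists; eassumption); try nra; try (apply Rmult_integral_contrapositive_currified; assumption).
  - replace (Derive (fun x => U x) r) with (- E r) by (symmetry; apply is_derive_unique; exact HU).
    replace (Derive (fun x => E x) r) with (Lf s r * E r) by (symmetry; apply is_derive_unique; exact HE).
    unfold Wpf. unf. field. repeat split; nra.
Qed.

Lemma start_val s E1 : 0 < s < 1 -> 0 < E1 ->
  gf s 1 1 E1 + 2 * (3 - (s+1)) * hf s 1 1 E1 = - (2 - s) / (s * E1 ^ 2).
Proof. intros hs hE. unf. field. lra. Qed.

Lemma dW_eq s r U E : 0 < s < 1 -> 1 <= r -> 0 < U -> 0 < E ->
  qf s U E * Wpf s r U E = Wf s r U E * af s r U E.
Proof. intros. unfold Wf, Wpf. unf. field. repeat split; nra. Qed.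

Definition Pg s r th e := ((-1) + (-4)*s + (1)*s*s) * ((/r)^0 * (th^0 * e^0)) + (((1/2)*s*s*s)/((2-s)*(2-s))) * ((/r)^0 * (th^0 * e^1)) + ((-1) + (-4)*s + (1)*s*s) * ((/r)^1 * (th^0 * e^0)) + (((-2)*s + (5)*s*s + (-3/2)*s*s*s)/((2-s)*(2-s))) * ((/r)^1 * (th^0 * e^1)) + ((-8)*s + (2)*s*s) * ((/r)^1 * (th^1 * e^0)) + ((1/2)*s) * ((/r)^1 * (th^1 * e^1)) + ((4) + (-4)*s + (1)*s*s) * ((/r)^2 * (th^0 * e^0)) + (((-4)*s + (15/2)*s*s + (-3)*s*s*s + (1/2)*s*s*s*s)/((2-s))) * ((/r)^2 * (th^0 * e^1)) + ((-8) + (-4)*s + (2)*s*s) * ((/r)^2 * (th^1 * e^0)) + (((3)*s + (3/2)*s*s)/((2-s))) * ((/r)^2 * (th^1 * e^1)) + ((4) + (-4)*s + (1)*s*s) * ((/r)^2 * (th^2 * e^0)) + ((4) + (-4)*s + (1)*s*s) * ((/r)^3 * (th^0 * e^0)) + ((-7/2)*s + (3)*s*s + (-1/2)*s*s*s) * ((/r)^3 * (th^0 * e^1)) + ((-4)*s + (2)*s*s) * ((/r)^3 * (th^1 * e^0)) + (((3)*s + (27/2)*s*s + (-9)*s*s*s + (3/2)*s*s*s*s)/((2-s))) * ((/r)^3 * (th^1 * e^1)) + ((-4) + (1)*s*s) * ((/r)^3 * (th^2 * e^0)) + ((-4)*s + (3)*s*s + (-1/2)*s*s*s) * ((/r)^4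 * (th^0 * e^1)) + ((8) + (-8)*s + (2)*s*s) * ((/r)^4 * (th^1 * e^0)) + ((1/2)*s + (6)*s*s + (-3/2)*s*s*s) * ((/r)^4 * (th^1 * e^1)) + ((-4) + (1)*s*s) * ((/r)^4 * (th^2 * e^0)) + ((6)*s*s + (-3/2)*s*s*s) * ((/r)^4 * (th^2 * e^1)) + ((-2)*s + (2)*s*s + (-1/2)*s*s*s) * ((/r)^5 * (th^0 * e^1)) + ((-6)*s + (6)*s*s + (-3/2)*s*s*s) * ((/r)^5 * (th^1 * e^1)) + ((4) + (-4)*s + (1)*s*s) * ((/r)^5 * (th^2 * e^0)) + ((6)*s + (3)*s*s + (-3/2)*s*s*s) * ((/r)^5 * (th^2 * e^1)) + ((-2)*s + (2)*s*s + (-1/2)*s*s*s) * ((/r)^5 * (th^3 * e^1)) + ((-6)*s + (6)*s*s + (-3/2)*s*s*s) * ((/r)^6 * (th^1 * e^1)) + ((3)*s*s + (-3/2)*s*s*s) * ((/r)^6 * (th^2 * e^1)) + ((2)*s + (-1/2)*s*s*s) * ((/r)^6 * (th^3 * e^1)) + ((-6)*s + (6)*s*s + (-3/2)*s*s*s) * ((/r)^7 * (th^2 * e^1)) + ((2)*s + (-1/2)*s*s*s) * ((/r)^7 * (th^3 * e^1)) + ((-2)*s + (2)*s*s + (-1/2)*s*s*s) * ((/r)^8 * (th^3 * e^1)).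
Definition Bg s E1 := Rabs ((-1) + (-4)*s + (1)*s*s) * ((/s)^0 * E1^0) + Rabs (((1/2)*s*s*s)/((2-s)*(2-s))) * ((/s)^0 * E1^1) + Rabs ((-1) + (-4)*s + (1)*s*s) * ((/s)^0 * E1^0) + Rabs (((-2)*s + (5)*s*s + (-3/2)*s*s*s)/((2-s)*(2-s))) * ((/s)^0 * E1^1) + Rabs ((-8)*s + (2)*s*s) * ((/s)^1 * E1^0) + Rabs ((1/2)*s) * ((/s)^1 * E1^1) + Rabs ((4) + (-4)*s + (1)*s*s) * ((/s)^0 * E1^0) + Rabs (((-4)*s + (15/2)*s*s + (-3)*s*s*s + (1/2)*s*s*s*s)/((2-s))) * ((/s)^0 * E1^1) + Rabs ((-8) + (-4)*s + (2)*s*s) * ((/s)^1 * E1^0) + Rabs (((3)*s + (3/2)*s*s)/((2-s))) * ((/s)^1 * E1^1) + Rabs ((4) + (-4)*s + (1)*s*s) * ((/s)^2 * E1^0) + Rabs ((4) + (-4)*s + (1)*s*s) * ((/s)^0 * E1^0) + Rabs ((-7/2)*s + (3)*s*s + (-1/2)*s*s*s) * ((/s)^0 * E1^1) + Rabs ((-4)*s + (2)*s*s) * ((/s)^1 * E1^0) + Rabs (((3)*s + (27/2)*s*s + (-9)*s*s*s + (3/2)*s*s*s*s)/((2-s))) * ((/s)^1 * E1^1) + Rabs ((-4) + (1)*s*s) * ((/s)^2 * E1^0) + Rabs ((-4)*s + (3)*s*s + (-1/2)*s*s*s) * ((/s)^0 * E1^1) + Rabs ((8) + (-8)*s + (2)*s*s)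 * ((/s)^1 * E1^0) + Rabs ((1/2)*s + (6)*s*s + (-3/2)*s*s*s) * ((/s)^1 * E1^1) + Rabs ((-4) + (1)*s*s) * ((/s)^2 * E1^0) + Rabs ((6)*s*s + (-3/2)*s*s*s) * ((/s)^2 * E1^1) + Rabs ((-2)*s + (2)*s*s + (-1/2)*s*s*s) * ((/s)^0 * E1^1) + Rabs ((-6)*s + (6)*s*s + (-3/2)*s*s*s) * ((/s)^1 * E1^1) + Rabs ((4) + (-4)*s + (1)*s*s) * ((/s)^2 * E1^0) + Rabs ((6)*s + (3)*s*s + (-3/2)*s*s*s) * ((/s)^2 * E1^1) + Rabs ((-2)*s + (2)*s*s + (-1/2)*s*s*s) * ((/s)^3 * E1^1) + Rabs ((-6)*s + (6)*s*s + (-3/2)*s*s*s) * ((/s)^1 * E1^1) + Rabs ((3)*s*s + (-3/2)*s*s*s) * ((/s)^2 * E1^1) + Rabs ((2)*s + (-1/2)*s*s*s) * ((/s)^3 * E1^1) + Rabs ((-6)*s + (6)*s*s + (-3/2)*s*s*s) * ((/s)^2 * E1^1) + Rabs ((2)*s + (-1/2)*s*s*s) * ((/s)^3 * E1^1) + Rabs ((-2)*s + (2)*s*s + (-1/2)*s*s*s) * ((/s)^3 * E1^1).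
Definition Ph s r th e := (((-1))/((2-s))) * ((/r)^0 * (th^0 * e^0)) + (((1/2)*s*s)/((2-s)*(2-s))) * ((/r)^0 * (th^0 * e^1)) + ((1)) * ((/r)^0 * (th^1 * e^0)) + ((-1)) * ((/r)^1 * (th^0 * e^0)) + (((1)*s + (1)*s*s + (-1/2)*s*s*s)/((2-s)*(2-s))) * ((/r)^1 * (th^0 * e^1)) + (((-1/2)*s)/((2-s))) * ((/r)^1 * (th^1 * e^1)) + (((3/2)*s)/((2-s))) * ((/r)^2 * (th^0 * e^1)) + ((-1)) * ((/r)^2 * (th^1 * e^0)) + (((-1)*s + (1)*s*s)/((2-s))) * ((/r)^2 * (th^1 * e^1)) + ((1/2)*s) * ((/r)^3 * (th^0 * e^1)) + (((3/2)*s)/((2-s))) * ((/r)^3 * (th^1 * e^1)) + ((-1/2)*s) * ((/r)^3 * (th^2 * e^1)) + ((1)*s) * ((/r)^4 * (th^1 * e^1)) + ((1/2)*s) * ((/r)^5 * (th^2 * e^1)).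
Definition Bh s E1 := Rabs (((-1))/((2-s))) * ((/s)^0 * E1^0) + Rabs (((1/2)*s*s)/((2-s)*(2-s))) * ((/s)^0 * E1^1) + Rabs ((1)) * ((/s)^1 * E1^0) + Rabs ((-1)) * ((/s)^0 * E1^0) + Rabs (((1)*s + (1)*s*s + (-1/2)*s*s*s)/((2-s)*(2-s))) * ((/s)^0 * E1^1) + Rabs (((-1/2)*s)/((2-s))) * ((/s)^1 * E1^1) + Rabs (((3/2)*s)/((2-s))) * ((/s)^0 * E1^1) + Rabs ((-1)) * ((/s)^1 * E1^0) + Rabs (((-1)*s + (1)*s*s)/((2-s))) * ((/s)^1 * E1^1) + Rabs ((1/2)*s) * ((/s)^0 * E1^1) + Rabs (((3/2)*s)/((2-s))) * ((/s)^1 * E1^1) + Rabs ((-1/2)*s) * ((/s)^2 * E1^1) + Rabs ((1)*s) * ((/s)^1 * E1^1) + Rabs ((1/2)*s) * ((/s)^2 * E1^1).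

Lemma g_asym s r th e : 0 < s < 1 -> 1 <= r -> 0 < e ->
  (gf s r (s * (e/(r*r)) * (r/(2-s) + 1 + th/r)) (e/(r*r)) + r + 4/(2-s)) * r * (1 + /r)^1 = Pg s r th e.
Proof. intros hs hr he. unfold Pg. unf. field. repeat split; nra. Qed.

Lemma h_asym s r th e : 0 < s < 1 -> 1 <= r -> 0 < e ->
  (hf s r (s * (e/(r*r)) * (r/(2-s) + 1 + th/r)) (e/(r*r)) - (r/(2-s) + 1)) * r * (1 + /r)^0 = Ph s r th e.
Proof. intros hs hr he. unfold Ph. unf. field. repeat split; nra. Qed.

Lemma term_bnd c x y z i j l Y Z : 0 <= x <= 1 -> Rabs y <= Y -> 0 <= z <= Z ->
  Rabs (c * (x^i * (y^j * z^l))) <= Rabs c * (Y^j * Z^l).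
Proof.
  intros hx hy hz. rewrite !Rabs_mult, <- !RPow_abs.
  apply Rmult_le_compat_l; [apply Rabs_pos|].
  rewrite (Rabs_right x) by lra. rewrite (Rabs_right z) by lra.
  assert (h1 : x^i <= 1) by (rewrite <- (pow1 i); apply pow_incr; lra).
  assert (h2 : Rabs y ^ j <= Y ^ j) by (apply pow_incr; split; [apply Rabs_pos|exact hy]).
  assert (h3 : z ^ l <= Z ^ l) by (apply pow_incr; lra).
  assert (h4 : 0 <= Rabs y ^ j) by (apply pow_le, Rabs_pos).
  assert (h5 : 0 <= z ^ l) by (apply pow_le; lra).
  assert (h6 : 0 <= x ^ i) by (apply pow_le; lra).
  replace (Y^j * Z^l) with (1 * (Y^j * Z^l)) by ring.
  apply Rmult_le_compat; try lra.
  - apply Rmult_le_pos; assumption.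
  - apply Rmult_le_compat; assumption.
Qed.

Ltac bnd := match goal with
| |- Rabs (_ + _) <= _ + _ => eapply Rle_trans; [apply Rabs_triang | apply Rplus_le_compat; bnd]
| |- _ => apply term_bnd; assumption
end.

Lemma Pg_bnd s r th e E1 : 0 <= /r <= 1 -> Rabs th <= /s -> 0 <= e <= E1 ->
  Rabs (Pg s r th e) <= Bg s E1.
Proof. intros. unfold Pg, Bg. bnd. Qed.

Lemma Ph_bnd s r th e E1 : 0 <= /r <= 1 -> Rabs th <= /s -> 0 <= e <= E1 ->
  Rabs (Ph s r th e) <= Bh s E1.
Proof. intros. unfold Ph, Bh. bnd. Qed.

Lemma flux_solve p du x K : 1 < p < 2 -> 1 <= x -> du x < 0 -> plap_flux_s p du x = K ->
  du x = - Ef (p-1) (-K/(4*PI)) x.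
Proof.
  intros hp hx hd hK. unfold plap_flux_s, grad_norm_s, sphere_area_s, phi_s in hK.
  assert (hph : 1 < 1 + 1/x) by (assert (0 < 1/x) by (apply Rdiv_lt_0_compat; lra); lra).
  set (ph := 1 + 1/x) in *.
  rewrite Rabs_left in hK by lra.
  assert (hph2 : 0 < ph^2) by (apply pow_lt; lra).
  set (X := - du x / ph^2) in *.
  assert (hX : 0 < X) by (unfold X; apply Rdiv_lt_0_compat; lra).
  assert (Hd : du x = - X * ph^2) by (unfold X; field; lra).
  assert (PI > 0) by apply PI_RGT_0.
  assert (HR : Rpower X (p-1) = (-K/(4*PI)) / (x^2 * ph^4)).
  { replace (p-1) with ((p-2)+1) by ring. rewrite Rpower_plus, Rpower_1 by lra.
    rewrite <- hK. rewrite Hd. field. repeat split; try lra. }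
  unfold Ef, Ag. fold ph.
  change (exp (1 / (p - 1) * ln (- K / (4 * PI) / (x ^ 2 * ph ^ 4))))
    with (Rpower (- K / (4 * PI) / (x ^ 2 * ph ^ 4)) (1 / (p - 1))).
  rewrite <- HR, Rpower_mult. replace ((p - 1) * (1 / (p - 1))) with 1 by (field; lra).
  rewrite Rpower_1 by lra. rewrite Hd. ring.
Qed.

Lemma lim_comb (Z f g : R -> R) C : 0 <= C ->
  (forall eps, 0 < eps -> exists M, forall y, M <= y -> Rabs (f y) < eps) ->
  (forall y, 1 <= y -> Rabs (g y) <= C / y) ->
  (forall y, 1 <= y -> Z y = f y + g y) ->
  forall eps, 0 < eps -> exists M, forall y, M <= y -> Rabs (Z y) < eps.
Proof.
  intros hC Hf Hg HZ eps heps. destruct (Hf (eps/2)) as [M1 HM1]; [lra|].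
  exists (Rmax M1 (Rmax 1 (2*C/eps + 1))). intros y hy.
  assert (h1 := Rmax_l M1 (Rmax 1 (2*C/eps + 1))). assert (h2 := Rmax_r M1 (Rmax 1 (2*C/eps + 1))).
  assert (h3 := Rmax_l 1 (2*C/eps + 1)). assert (h4 := Rmax_r 1 (2*C/eps + 1)).
  rewrite HZ by lra. eapply Rle_lt_trans; [apply Rabs_triang|].
  assert (Rabs (f y) < eps/2) by (apply HM1; lra).
  assert (Rabs (g y) <= C / y) by (apply Hg; lra).
  assert (C / y < eps / 2).
  { apply Rmult_lt_reg_r with y; [lra|]. unfold Rdiv. rewrite Rmult_assoc, Rinv_l, Rmult_1_r by lra.
    assert (2*C/eps + 1 <= y) by lra.
    assert (2*C/eps * eps = 2 * C) by (field; lra).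
    assert ((2*C/eps + 1) * eps <= y * eps) by (apply Rmult_le_compat_r; lra).
    lra. }
  lra.
Qed.

Lemma pos_lem s x U E : 0 < s < 1 -> 1 <= x -> 0 < U -> 0 < E ->
  (x = 1 \/ (1 < x /\ qf s U E < x*(x+1)/((2-s)*(x-1)))) ->
  0 < hf s x U E /\ 0 < af s x U E.
Proof.
  intros hs hx hU hE hc. assert (hq : 0 < qf s U E) by (unfold qf; apply Rdiv_lt_0_compat; nra).
  destruct hc as [e|[hx1 hb]].
  - subst x. unfold hf, af, Hf, Zf, Ff, E2f, cc, Mf.
    replace (1 - 1 / (1 * 1)) with 0 by field. replace (-2 * (2 - s) * (1 - 1) / (s * 1 * (1 + 1))) with 0 by (field; lra).
    split.
    + apply Rmult_lt_0_compat; [exact hq|].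
      replace (0 + - s / 2 * E * (0 * qf s U E - (1 + 1) * (1 + 1) / ((2 - s) * 1))) with (2 * s * E / (2 - s)) by (field; lra).
      apply Rdiv_lt_0_compat; nra.
    + replace (2 / s + 0 * qf s U E) with (2 / s) by ring. apply Rdiv_lt_0_compat; lra.
  - set (q := qf s U E) in *. set (B := x*(x+1)/((2-s)*(x-1))) in *.
    assert (hZ : Zf s x U E = (x-1)*(x+1)/(x*x) * (q - B)).
    { unfold Zf, Ff, E2f, B. fold q. field. repeat split; lra. }
    assert (hZn : Zf s x U E < 0).
    { rewrite hZ. assert (0 < (x-1)*(x+1)/(x*x)) by (apply Rdiv_lt_0_compat; nra). nra. }
    assert (hF : 0 < Ff x) by (unfold Ff; assert (1/(x*x) < 1) by (apply Rmult_lt_reg_r with (x*x); [nra|]; unfold Rdiv; rewrite Rmult_1_l, Rinv_l by nra; nra); lra).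
    split.
    + unfold hf, Hf, cc. fold q. apply Rmult_lt_0_compat; [exact hq|].
      assert (0 < - s / 2 * E * Zf s x U E) by (replace (- s / 2 * E * Zf s x U E) with (s / 2 * E * (- Zf s x U E)) by field; repeat apply Rmult_lt_0_compat; lra).
      lra.
    + assert (ha : af s x U E = 2*(2-s)*(x-1)/(s*x*(x+1)) * (B - q)).
      { unfold af, Mf, B. fold q. field. repeat split; lra. }
      rewrite ha. apply Rmult_lt_0_compat; [|lra]. apply Rdiv_lt_0_compat; [|nra]. nra.
Qed.

Lemma Zl_der s k (U : R -> R) x : 0 < s < 1 -> 0 < k -> 1 <= x -> is_derive U x (- Ef s k x) ->
  is_derive (fun y => U y - s * Ef s k y * (y/(2-s) + 1)) x
    (- Ef s k x * (2*(1-s)/(x*(x+1)))).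
Proof.
  intros hs hk hx HU. assert (HE := Ef_deriv s k x ltac:(lra) hk ltac:(lra)).
  auto_derive.
  - repeat split; try (eexists; eassumption); lra.
  - replace (Derive (fun x => U x) x) with (- Ef s k x) by (symmetry; apply is_derive_unique; exact HU).
    replace (Derive (fun x => Ef s k x) x) with (Lf s x * Ef s k x) by (symmetry; apply is_derive_unique; exact HE).
    unfold Lf. field. repeat split; lra.
Qed.

Lemma Zu_der s k (U : R -> R) x : 0 < s < 1 -> 0 < k -> 1 <= x -> is_derive U x (- Ef s k x) ->
  is_derive (fun y => s * Ef s k y * (y/(2-s) + 1 + 1/(s*y)) - U y) x
    (Ef s k x * (((2*(1-s) - (2+s)/s) * x + (2-3*s)/s) / (x*x*(x+1)))).
Proof.
  intros hs hk hx HU. assert (HE := Ef_deriv s k x ltac:(lra) hk ltac:(lra)).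
  auto_derive.
  - repeat split; try (eexists; eassumption); nra.
  - replace (Derive (fun x => U x) x) with (- Ef s k x) by (symmetry; apply is_derive_unique; exact HU).
    replace (Derive (fun x => Ef s k x) x) with (Lf s x * Ef s k x) by (symmetry; apply is_derive_unique; exact HE).
    unfold Lf. field. repeat split; lra.
Qed.

Lemma Zm_der s k (U : R -> R) x : 0 < s < 1 -> 0 < k -> 1 < x -> is_derive U x (- Ef s k x) ->
  is_derive (fun y => s * Ef s k y * (y*(y+1)/((2-s)*(y-1))) - U y) x
    (Ef s k x * (-2*s*x/((2-s)*((x-1)*(x-1))))).
Proof.
  intros hs hk hx HU. assert (HE := Ef_deriv s k x ltac:(lra) hk ltac:(lra)).
  auto_derive.
  - repeat split; try (eexists; eassumption); nra.
  - replace (Derive (fun x => U x) x) with (- Ef s k x) by (symmetry; apply is_derive_unique; exact HU).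
    replace (Derive (fun x => Ef s k x) x) with (Lf s x * Ef s k x) by (symmetry; apply is_derive_unique; exact HE).
    unfold Lf. field. repeat split; lra.
Qed.

Lemma Ex_der s k x : 0 < s < 1 -> 0 < k -> 1 <= x ->
  is_derive (fun y => Ef s k y * y) x (Ef s k x * (Mf s x / 2 * x)).
Proof.
  intros hs hk hx. assert (HE := Ef_deriv s k x ltac:(lra) hk ltac:(lra)).
  auto_derive.
  - repeat split; try (eexists; eassumption); nra.
  - replace (Derive (fun x => Ef s k x) x) with (Lf s x * Ef s k x) by (symmetry; apply is_derive_unique; exact HE).
    unfold Lf, Mf. field. repeat split; lra.
Qed.

Lemma Ex2_der s k x : 0 < s < 1 -> 0 < k -> 1 <= x ->
  is_derive (fun y => Ef s k y * (y*y)) x (Ef s k x * (2 * ((s-1)*x + 1) / (s*(x+1)) * x)).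
Proof.
  intros hs hk hx. assert (HE := Ef_deriv s k x ltac:(lra) hk ltac:(lra)).
  auto_derive.
  - repeat split; try (eexists; eassumption); nra.
  - replace (Derive (fun x => Ef s k x) x) with (Lf s x * Ef s k x) by (symmetry; apply is_derive_unique; exact HE).
    unfold Lf. field. repeat split; lra.
Qed.

Lemma mul_nonpos a b : 0 <= a -> b <= 0 -> a * b <= 0.
Proof. intros ha hb. assert (a * b <= a * 0) by (apply Rmult_le_compat_l; lra). lra. Qed.

Lemma dw_l D f x l l' : deriv_within D f x l -> l = l' -> deriv_within D f x l'.
Proof. intros H e; subst; exact H. Qed.

Lemma lim_comb2 (Z f g : R -> R) C a : 0 <= C -> 0 < a ->
  (forall eps, 0 < eps -> exists M, forall y, M <= y -> Rabs (f y) < eps) ->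
  (forall y, a <= y -> Rabs (g y) <= C / y) ->
  (forall y, a <= y -> Z y = f y + g y) ->
  forall eps, 0 < eps -> exists M, forall y, M <= y -> Rabs (Z y) < eps.
Proof.
  intros hC ha Hf Hg HZ eps heps. destruct (Hf (eps/2)) as [M1 HM1]; [lra|].
  exists (Rmax M1 (Rmax a (2*C/eps + 1))). intros y hy.
  assert (h1 := Rmax_l M1 (Rmax a (2*C/eps + 1))). assert (h2 := Rmax_r M1 (Rmax a (2*C/eps + 1))).
  assert (h3 := Rmax_l a (2*C/eps + 1)). assert (h4 := Rmax_r a (2*C/eps + 1)).
  rewrite HZ by lra. eapply Rle_lt_trans; [apply Rabs_triang|].
  assert (Rabs (f y) < eps/2) by (apply HM1; lra).
  assert (Rabs (g y) <= C / y) by (apply Hg; lra).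
  assert (C / y < eps / 2).
  { apply Rmult_lt_reg_r with y; [lra|]. unfold Rdiv. rewrite Rmult_assoc, Rinv_l, Rmult_1_r by lra.
    assert (2*C/eps + 1 <= y) by lra.
    assert (2*C/eps * eps = 2 * C) by (field; lra).
    assert ((2*C/eps + 1) * eps <= y * eps) by (apply Rmult_le_compat_r; lra).
    lra. }
  lra.
Qed.

Lemma small_term e y P C Eb : 0 < y -> 0 <= e -> 0 <= P <= C * y -> 0 <= C -> e * (y*y) <= Eb ->
  Rabs (e * P) <= Eb * C / y.
Proof.
  intros hy he hP hC hE. rewrite Rabs_right by (apply Rle_ge, Rmult_le_pos; lra).
  apply Rmult_le_reg_r with y; [lra|].
  replace (Eb * C / y * y) with (Eb * C) by (field; lra).
  assert (e * P * y <= e * (C * y) * y).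
  { apply Rmult_le_compat_r; [lra|]. apply Rmult_le_compat_l; lra. }
  assert (e * (C * y) * y = e * (y * y) * C) by ring.
  assert (e * (y * y) * C <= Eb * C) by (apply Rmult_le_compat_r; lra).
  lra.
Qed.

Lemma div_bnd X r n P B : 1 <= r -> X * r * (1 + /r)^n = P -> Rabs P <= B -> Rabs X <= B / r.
Proof.
  intros hr e hP.
  assert (h1 : 1 <= (1 + /r)^n).
  { assert (0 < /r) by (apply Rinv_0_lt_compat; lra). apply Rle_trans with (1^n); [rewrite pow1; lra | apply pow_incr; lra]. }
  apply Rmult_le_reg_r with r; [lra|]. replace (B / r * r) with B by (field; lra).
  rewrite <- e in hP. rewrite !Rabs_mult in hP. rewrite (Rabs_right r) in hP by lra.
  rewrite (Rabs_right ((1 + /r)^n)) in hP by lra.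
  assert (0 <= Rabs X * r) by (apply Rmult_le_pos; [apply Rabs_pos | lra]).
  assert (Rabs X * r * 1 <= Rabs X * r * (1 + / r) ^ n) by (apply Rmult_le_compat_l; lra).
  lra.
Qed.

Lemma W_id s u du E x : 0 < s < 1 -> 1 <= x -> 0 < u x -> du x = - E x -> 0 < E x ->
  grad_norm_s x (dw_of (s+1) u du x) ^ 2 * sphere_area_s x = Wf s x (u x) (E x).
Proof.
  intros hs hx hu hd hE. unfold grad_norm_s, dw_of, sphere_area_s, Wf, qf.
  assert (hph : 1 < phi_s x) by (unfold phi_s; assert (0 < 1/x) by (apply Rdiv_lt_0_compat; lra); lra).
  set (ph := phi_s x) in *.
  replace ((Rabs ((1 - (s + 1)) * du x / u x) / ph ^ 2) ^ 2) with
     (Rabs ((1 - (s + 1)) * du x / u x) ^ 2 / (ph ^ 2) ^ 2) by (field; lra).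
  rewrite pow2_abs, hd. field. repeat split; lra.
Qed.

Theorem proposition3p11 (p : R) (hp : 1 < p < 2) (u du rho : R -> R)
  (Hu : is_radial_plap_solution p u du)
  (Hrho : forall t, 0 <= t -> 1 <= rho t /\ w_of p u (rho t) = t) :
  exists g dg h dh dW : R -> R,
    (forall t, 0 <= t ->
       deriv_within (fun s => 0 <= s) g t (dg t) /\
       deriv_within (fun s => 0 <= s) h t (dh t) /\
       deriv_within (fun s => 0 <= s) (W_of p u du rho) t (dW t)) /\
    (forall t, 0 <= t ->
       systemS p (W_of p u du rho t) (dW t) (g t) (dg t) (h t) (dh t)) /\
    g 0 + 2 * (3 - p) * h 0 < 0 /\
    (forall t, 0 <= t -> 0 < h t /\ 0 < dg t + h t) /\
    (exists C R0, 1 <= R0 /\ forall r, R0 <= r ->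
       Rabs (g (w_of p u r) - (- r - 4 / (3 - p))) <= C / r /\
       Rabs (h (w_of p u r) - (r / (3 - p) + 1)) <= C / r).
Proof.
  destruct Hu as [Hdu [Hfl [Hu1 Hlim]]].
  remember (p - 1) as s eqn:Hs.
  assert (hs : 0 < s < 1) by lra.
  assert (hps : p = s + 1) by lra. subst p. clear Hs.
  assert (HPI : PI > 0) by apply PI_RGT_0.
  set (ue := extf u du).
  assert (Hue : forall x, 1 <= x -> is_derive ue x (du x)) by (apply ext_derive; exact Hdu).
  assert (Hueq : forall x, 1 <= x -> ue x = u x) by (intros; apply extf_eq; auto).
  set (fl := plap_flux_s (s+1) du).
  assert (Hfe : forall x, 1 <= x -> is_derive (extf fl (fun _ => 0)) x ((fun _ => 0) x))
    by (apply (ext_derive fl (fun _ => 0)); exact Hfl).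
  assert (Hconst : forall x, 1 <= x -> fl x = fl 1).
  { intros x hx. rewrite <- (extf_eq fl (fun _ => 0) x hx), <- (extf_eq fl (fun _ => 0) 1) by lra.
    apply Rle_antisym.
    - apply (nonincr _ (fun _ => 0) 1); auto; intros; lra.
    - apply (nondecr _ (fun _ => 0) 1); auto; intros; lra. }
  assert (Hphi : forall x, 1 <= x -> 1 < phi_s x).
  { intros x hx. unfold phi_s. assert (0 < 1/x) by (apply Rdiv_lt_0_compat; lra). lra. }
  set (Pf := fun x => Rpower (grad_norm_s x (du x)) (s + 1 - 2) / phi_s x ^ 2 * sphere_area_s x).
  assert (HPf : forall x, 1 <= x -> 0 < Pf x).
  { intros x hx. unfold Pf, sphere_area_s. assert (h1 := Hphi x hx).
    apply Rmult_lt_0_compat; [apply Rdiv_lt_0_compat; [unfold Rpower; apply exp_pos | apply pow_lt; lra]|].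
    apply Rmult_lt_0_compat; [apply Rmult_lt_0_compat; [apply Rmult_lt_0_compat; lra | apply pow_lt; lra] | apply pow_lt; lra]. }
  assert (Hfl_eq : forall x, 1 <= x -> fl x = Pf x * du x).
  { intros x hx. unfold fl, plap_flux_s, Pf. assert (h1 := Hphi x hx). field. lra. }
  set (K := fl 1).
  assert (HK : K < 0).
  { destruct (Rlt_or_le K 0) as [h|h]; [exact h|exfalso].
    assert (hdu : forall x, 1 <= x -> 0 <= du x).
    { intros x hx. assert (e := Hconst x hx). rewrite Hfl_eq in e by auto.
      assert (h2 := HPf x hx). destruct (Rlt_or_le (du x) 0) as [h3|h3]; [|exact h3].
      assert (Pf x * du x < 0) by (apply Rmult_pos_neg; assumption). unfold K in h. lra. }
    destruct (Hlim (1/2)) as [M HM]; [lra|].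
    assert (hy1 := Rmax_l M 1). assert (hy2 := Rmax_r M 1). set (y := Rmax M 1) in *.
    assert (ue 1 <= ue y) by (apply (nondecr ue du 1); auto; lra).
    rewrite !Hueq in H by lra. rewrite Hu1 in H.
    specialize (HM y hy1). apply Rabs_def2 in HM. lra. }
  assert (Hdun : forall x, 1 <= x -> du x < 0).
  { intros x hx. assert (e := Hconst x hx). rewrite Hfl_eq in e by auto. fold K in e.
    assert (h2 := HPf x hx). destruct (Rlt_or_le (du x) 0) as [h3|h3]; [exact h3|].
    assert (0 <= Pf x * du x) by (apply Rmult_le_pos; lra). lra. }
  assert (Hupos : forall x, 1 <= x -> 0 < u x).
  { intros x hx. destruct (Rlt_or_le 0 (u x)) as [h|h]; [exact h|exfalso].
    assert (h1 : ue (x+1) < ue x) by (apply (decr_strict ue du 1); auto; lra).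
    rewrite (Hueq x), (Hueq (x+1)) in h1 by lra.
    destruct (Hlim (- u (x+1))) as [M HM]; [lra|].
    assert (hy1 := Rmax_l M (x+1)). assert (hy2 := Rmax_r M (x+1)). set (y := Rmax M (x+1)) in *.
    assert (ue y <= ue (x+1)) by (apply (nonincr ue du 1); auto; try lra; intros; apply Rlt_le, Hdun; auto).
    specialize (HM y hy1). rewrite <- (Hueq y) in HM by lra. rewrite (Hueq (x+1)) in H by lra.
    apply Rabs_def2 in HM. lra. }
  set (kap := - K / (4 * PI)).
  assert (hkap : 0 < kap) by (unfold kap; apply Rdiv_lt_0_compat; lra).
  set (E := Ef s kap).
  assert (HduE : forall x, 1 <= x -> du x = - E x).
  { intros x hx. unfold E, kap. replace s with ((s+1)-1) by ring.
    apply flux_solve; try lra; auto. }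
  assert (HE : forall x, 0 < x -> is_derive E x (Lf s x * E x)) by (intros; apply Ef_deriv; lra).
  assert (HEpos : forall x, 0 < x -> 0 < E x) by (intros; apply Ef_pos; lra).
  assert (HU : forall x, 1 <= x -> is_derive ue x (- E x)) by (intros x hx; rewrite <- HduE by auto; auto).
  assert (Hup : forall x, 1 <= x -> 0 < ue x) by (intros; rewrite Hueq; auto).
  assert (Hue1 : ue 1 = 1) by (rewrite Hueq by lra; exact Hu1).
  set (E1 := E 1). assert (hE1 : 0 < E1) by (apply HEpos; lra).
  assert (HEx : forall x, 1 <= x -> E x * x <= E1).
  { intros x hx. replace E1 with (E 1 * 1) by (unfold E1; ring).
    apply (nonincr (fun y => E y * y) (fun y => E y * (Mf s y / 2 * y)) 1); auto; try lra.
    - intros y hy. apply Ex_der; lra.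
    - intros y hy. assert (0 < E y) by (apply HEpos; lra).
      assert (Mf s y <= 0).
      { unfold Mf. replace (-2 * (2 - s) * (y - 1) / (s * y * (y + 1))) with
           (- (2 * (2 - s) * (y - 1) / (s * y * (y + 1)))) by (field; lra).
        assert (0 <= 2 * (2 - s) * (y - 1) / (s * y * (y + 1))); [|lra].
        apply Rmult_le_pos; [|apply Rlt_le, Rinv_0_lt_compat; nra]. nra. }
      replace (E y * (Mf s y / 2 * y)) with ((E y * y) * (Mf s y / 2)) by field.
      apply mul_nonpos; [nra|lra]. }
  set (R1 := 1/(1-s)). assert (hR1 : 1 <= R1).
  { unfold R1. apply Rmult_le_reg_r with (1-s); [lra|]. replace (1/(1-s)*(1-s)) with 1 by (field; lra). lra. }
  set (Eb := E1 * R1). assert (hEb : 0 < Eb) by (unfold Eb; nra).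
  assert (HEx2 : forall x, 1 <= x -> E x * (x*x) <= Eb).
  { intros x hx. assert (0 < E x) by (apply HEpos; lra). destruct (Rle_lt_dec x R1) as [h|h].
    - assert (E x * x <= E1) by auto. unfold Eb.
      replace (E x * (x * x)) with ((E x * x) * x) by ring.
      apply Rmult_le_compat; try nra.
    - assert (E x * (x*x) <= E R1 * (R1 * R1)).
      { apply (nonincr (fun y => E y * (y*y)) (fun y => E y * (2 * ((s-1)*y + 1) / (s*(y+1)) * y)) R1); auto; try lra.
        - intros y hy. apply Ex2_der; lra.
        - intros y hy. assert (0 < E y) by (apply HEpos; lra).
          assert ((s-1)*y + 1 <= 0).
          { assert ((s-1)*R1 + 1 = 0) by (unfold R1; field; lra). nra. }
          assert (2 * ((s - 1) * y + 1) / (s * (y + 1)) <= 0).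
          { unfold Rdiv. rewrite Rmult_comm. apply mul_nonpos; [apply Rlt_le, Rinv_0_lt_compat; nra | lra]. }
          replace (E y * (2 * ((s - 1) * y + 1) / (s * (y + 1)) * y)) with ((E y * y) * (2 * ((s - 1) * y + 1) / (s * (y + 1)))) by (field; repeat split; try lra; nra).
          apply mul_nonpos; [nra|lra]. }
      assert (E R1 * R1 <= E1) by auto. unfold Eb.
      assert (E R1 * (R1 * R1) <= E1 * R1).
      { replace (E R1 * (R1 * R1)) with ((E R1 * R1) * R1) by ring. apply Rmult_le_compat_r; lra. }
      lra. }
  assert (Hql : forall x, 1 <= x -> s * E x * (x/(2-s) + 1) < ue x).
  { intros x hx.
    assert (0 < (fun y => ue y - s * E y * (y/(2-s) + 1)) x); [|simpl in *; lra].
    apply (cmp x (fun y => ue y - s * E y * (y/(2-s) + 1)) (fun y => - E y * (2*(1-s)/(y*(y+1))))).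
    - intros y hy. apply Zl_der; try lra. apply HU; lra.
    - intros y hy. assert (0 < E y) by (apply HEpos; lra).
      assert (0 < 2*(1-s)/(y*(y+1))) by (apply Rdiv_lt_0_compat; nra). nra.
    - apply (lim_comb2 _ u (fun y => - (s * E y * (y/(2-s) + 1))) (Eb * (s * (1/(2-s) + 1))) 1); try lra; auto.
      + apply Rmult_le_pos; [lra|]. assert (0 < 1/(2-s)) by (apply Rdiv_lt_0_compat; lra). nra.
      + intros y hy. rewrite Rabs_Ropp. replace (s * E y * (y/(2-s) + 1)) with (E y * (s * (y/(2-s) + 1))) by ring.
        apply small_term; try lra.
        * apply Rlt_le, HEpos; lra.
        * assert (0 < 1/(2-s)) by (apply Rdiv_lt_0_compat; lra).
          replace (y/(2-s)) with (y * (1/(2-s))) by (field; lra). set (a := 1/(2-s)) in *.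
          split; [apply Rmult_le_pos; nra|].
          assert (s * (a + 1) * y - s * (y * a + 1) = s * (y - 1)) by ring. nra.
        * assert (0 < 1/(2-s)) by (apply Rdiv_lt_0_compat; lra). nra.
        * auto.
      + intros y hy. rewrite Hueq by lra. ring. }
  assert (Hqu : forall x, 1 <= x -> ue x < s * E x * (x/(2-s) + 1 + 1/(s*x))).
  { intros x hx.
    assert (0 < (fun y => s * E y * (y/(2-s) + 1 + 1/(s*y)) - ue y) x); [|simpl in *; lra].
    apply (cmp x (fun y => s * E y * (y/(2-s) + 1 + 1/(s*y)) - ue y) (fun y => E y * (((2*(1-s) - (2+s)/s) * y + (2-3*s)/s) / (y*y*(y+1))))).
    - intros y hy. apply Zu_der; try lra. apply HU; lra.
    - intros y hy. assert (0 < E y) by (apply HEpos; lra).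
      set (A := 2*(1-s) - (2+s)/s).
      assert (hA : A < 0).
      { unfold A. assert (2 < (2+s)/s).
        { apply Rmult_lt_reg_r with s; [lra|]. replace ((2+s)/s*s) with (2+s) by (field; lra). lra. }
        lra. }
      assert (A * y <= A) by nra.
      assert (A + (2-3*s)/s = -2 - 2*s) by (unfold A; field; lra).
      assert ((A * y + (2 - 3 * s) / s) / (y * y * (y + 1)) < 0).
      { unfold Rdiv at 1. apply Rmult_neg_pos; [lra|]. apply Rinv_0_lt_compat. nra. }
      nra.
    - apply (lim_comb2 _ (fun y => - u y) (fun y => s * E y * (y/(2-s) + 1 + 1/(s*y))) (Eb * (s * (1/(2-s) + 1) + 1)) 1); try lra; auto.
      + apply Rmult_le_pos; [lra|]. assert (0 < 1/(2-s)) by (apply Rdiv_lt_0_compat; lra). nra.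
      + intros eps heps. destruct (Hlim eps heps) as [M HM]. exists M. intros y hy. rewrite Rabs_Ropp. auto.
      + intros y hy. replace (s * E y * (y/(2-s) + 1 + 1/(s*y))) with (E y * (s * (y/(2-s) + 1) + 1/y)) by (field; lra).
        apply small_term; try lra.
        * apply Rlt_le, HEpos; lra.
        * assert (0 < 1/(2-s)) by (apply Rdiv_lt_0_compat; lra).
          assert (0 < 1/y) by (apply Rdiv_lt_0_compat; lra).
          assert (1/y <= y) by (apply Rmult_le_reg_r with y; [lra|]; replace (1/y*y) with 1 by (field; lra); nra).
          replace (y/(2-s)) with (y * (1/(2-s))) by (field; lra). set (a := 1/(2-s)) in *.
          split; [assert (0 <= s * (y * a + 1)) by (apply Rmult_le_pos; nra); lra|].
          assert ((s * (a + 1) + 1) * y - (s * (y * a + 1) + 1 / y) = s * (y - 1) + (y - 1/y)) by ring. nra.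
        * assert (0 < 1/(2-s)) by (apply Rdiv_lt_0_compat; lra). nra.
        * auto.
      + intros y hy. rewrite Hueq by lra. ring. }
  assert (Hqm : forall x, 1 < x -> ue x < s * E x * (x*(x+1)/((2-s)*(x-1)))).
  { intros x hx.
    assert (0 < (fun y => s * E y * (y*(y+1)/((2-s)*(y-1))) - ue y) x); [|simpl in *; lra].
    apply (cmp x (fun y => s * E y * (y*(y+1)/((2-s)*(y-1))) - ue y) (fun y => E y * (-2*s*y/((2-s)*((y-1)*(y-1)))))).
    - intros y hy. apply Zm_der; try lra. apply HU; lra.
    - intros y hy. assert (0 < E y) by (apply HEpos; lra).
      assert (-2*s*y/((2-s)*((y-1)*(y-1))) < 0).
      { unfold Rdiv. apply Rmult_neg_pos; [nra|]. apply Rinv_0_lt_compat. apply Rmult_lt_0_compat; nra. }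
      nra.
    - apply (lim_comb2 _ (fun y => - u y) (fun y => s * E y * (y*(y+1)/((2-s)*(y-1)))) (Eb * (s * (x+1)/((2-s)*(x-1)))) x); try lra; auto.
      + apply Rmult_le_pos; [lra|]. apply Rmult_le_pos; [nra|]. apply Rlt_le, Rinv_0_lt_compat. nra.
      + intros eps heps. destruct (Hlim eps heps) as [M HM]. exists M. intros y hy. rewrite Rabs_Ropp. auto.
      + intros y hy. replace (s * E y * (y*(y+1)/((2-s)*(y-1)))) with (E y * (s * (y*(y+1)/((2-s)*(y-1))))) by ring.
        apply small_term; try lra.
        * apply Rlt_le, HEpos; lra.
        * assert (hP : 0 <= s * (y * (y + 1) / ((2 - s) * (y - 1)))).
          { apply Rmult_le_pos; [lra|]. apply Rmult_le_pos; [nra|]. apply Rlt_le, Rinv_0_lt_compat. nra. }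
          split; [exact hP|].
          assert (s * (x + 1) / ((2 - s) * (x - 1)) * y - s * (y * (y + 1) / ((2 - s) * (y - 1)))
                  = 2 * s * y * (y - x) / ((2 - s) * (x - 1) * (y - 1))) by (field; lra).
          assert (0 <= 2 * s * y * (y - x) / ((2 - s) * (x - 1) * (y - 1))).
          { apply Rmult_le_pos; [|apply Rlt_le, Rinv_0_lt_compat; apply Rmult_lt_0_compat; nra].
            apply Rmult_le_pos; nra. }
          lra.
        * apply Rmult_le_pos; [nra|]. apply Rlt_le, Rinv_0_lt_compat. nra.
        * apply HEx2; lra.
      + intros y hy. rewrite Hueq by lra. ring. }
  set (we := fun x => (1 - (s+1)) * ln (ue x)).
  assert (Hwe : forall x, 1 <= x -> is_derive we x (s * E x / ue x)).
  { intros x hx. assert (h1 := Hup x hx). assert (h2 := HU x hx). unfold we. auto_derive.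
    - split; [eexists; exact h2 | split; [exact h1 | exact I]].
    - replace (Derive (fun x => ue x) x) with (- E x) by (symmetry; apply is_derive_unique; exact h2).
      field. lra. }
  assert (Hwp : forall x, 1 <= x -> 0 < s * E x / ue x).
  { intros x hx. apply Rdiv_lt_0_compat; [|apply Hup; lra]. apply Rmult_lt_0_compat; [lra|apply HEpos; lra]. }
  assert (Hweq : forall x, 1 <= x -> w_of (s+1) u x = we x).
  { intros x hx. unfold w_of, we. rewrite Hueq by lra. reflexivity. }
  assert (Hr : forall t, 0 <= t -> 1 <= rho t /\ we (rho t) = t).
  { intros t ht. destruct (Hrho t ht) as [h1 h2]. split; [exact h1|]. rewrite <- Hweq by lra. exact h2. }
  assert (Hinc : forall x y, 1 <= x -> x < y -> we x < we y) by (apply (incr_strict we _ 1 Hwe Hwp)).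
  assert (Hwe1 : we 1 = 0) by (unfold we; rewrite Hue1, ln_1; ring).
  assert (Hrw : forall x, 1 <= x -> rho (we x) = x).
  { intros x hx. assert (h0 : 0 <= we x).
    { destruct (Rle_lt_or_eq_dec 1 x hx) as [h|h]; [rewrite <- Hwe1; apply Rlt_le, Hinc; lra | subst; lra]. }
    destruct (Hr (we x) h0) as [h1 h2].
    destruct (Rtotal_order (rho (we x)) x) as [lt|[eq|gt]]; [exfalso| exact eq | exfalso].
    - assert (we (rho (we x)) < we x) by (apply Hinc; lra). lra.
    - assert (we x < we (rho (we x))) by (apply Hinc; lra). lra. }
  assert (Hrho0 : rho 0 = 1) by (rewrite <- Hwe1; apply Hrw; lra).
  assert (Hrd : forall t, 0 <= t -> deriv_within (fun s => 0 <= s) rho t (/ (s * E (rho t) / ue (rho t))))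
    by (apply (inv_within we (fun x => s * E x / ue x) rho); auto).
  assert (Hinj : forall t y, 0 <= t -> 0 <= y -> y <> t -> rho y <> rho t).
  { intros t y ht hy hne e. apply hne. destruct (Hr y hy) as [_ e1]. destruct (Hr t ht) as [_ e2].
    rewrite <- e1, <- e2, e. reflexivity. }
  set (Q := fun x => qf s (ue x) (E x)).
  set (G := fun x => gf s x (ue x) (E x)).
  assert (HQ : forall x, 1 <= x -> / (s * E x / ue x) = Q x).
  { intros x hx. unfold Q, qf. assert (0 < E x) by (apply HEpos; lra). assert (0 < ue x) by auto. field. lra. }
  assert (HWid : forall y, 0 <= y -> W_of (s+1) u du rho y = Wf s (rho y) (ue (rho y)) (E (rho y))).
  { intros y hy. destruct (Hr y hy) as [h1 _]. unfold W_of. rewrite (Hueq (rho y)) by lra.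
    apply W_id; auto. apply HEpos; lra. }
  exists (fun t => G (rho t)), (fun t => Q (rho t) * Derive G (rho t)),
         (fun t => hf s (rho t) (ue (rho t)) (E (rho t))),
         (fun t => Q (rho t) * hpf s (rho t) (ue (rho t)) (E (rho t))),
         (fun t => Q (rho t) * Wpf s (rho t) (ue (rho t)) (E (rho t))).
  split; [|split; [|split; [|split]]].
  - intros t ht. destruct (Hr t ht) as [hr1 hr2].
    assert (hE0 : 0 < E (rho t)) by (apply HEpos; lra).
    split; [|split].
    + eapply dw_l.
      * apply (chain_within rho G t (/ (s * E (rho t) / ue (rho t))) (Derive G (rho t))); [intros y hy hne; apply Hinj; auto | apply Hrd; auto |].
        unfold G. apply g_ex; auto; apply HE; lra.
      * rewrite HQ by lra. ring.
    + eapply dw_l.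
      * apply (chain_within rho (fun x => hf s x (ue x) (E x)) t (/ (s * E (rho t) / ue (rho t))) (hpf s (rho t) (ue (rho t)) (E (rho t))));
          [intros y hy hne; apply Hinj; auto | apply Hrd; auto |].
        apply h_der; auto; apply HE; lra.
      * rewrite HQ by lra. ring.
    + apply (dw_ext _ (fun y => Wf s (rho y) (ue (rho y)) (E (rho y)))); [intros y hy; symmetry; auto | exact ht |].
      eapply dw_l.
      * apply (chain_within rho (fun x => Wf s x (ue x) (E x)) t (/ (s * E (rho t) / ue (rho t))) (Wpf s (rho t) (ue (rho t)) (E (rho t))));
          [intros y hy hne; apply Hinj; auto | apply Hrd; auto |].
        apply W_der; auto; apply HE; lra.
      * rewrite HQ by lra. ring.
  - intros t ht. destruct (Hr t ht) as [hr1 hr2]. rewrite HWid by exact ht.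
    unfold G, Q. apply core; [exact hs | exact hr1 | apply HU; exact hr1 | apply HE; lra | apply Hup; exact hr1 | apply HEpos; lra].
  - cbv beta. rewrite Hrho0. unfold G. rewrite Hue1. fold E1.
    rewrite start_val by lra.
    assert (0 < (2 - s) / (s * E1 ^ 2)) by (apply Rdiv_lt_0_compat; [lra|]; apply Rmult_lt_0_compat; [lra|apply pow_lt; lra]).
    lra.
  - intros t ht. destruct (Hr t ht) as [hr1 hr2]. set (x := rho t) in *.
    assert (hE0 : 0 < E x) by (apply HEpos; lra).
    assert (hU0 : 0 < ue x) by auto.
    assert (Hpa : 0 < hf s x (ue x) (E x) /\ 0 < af s x (ue x) (E x)).
    { apply pos_lem; auto.
      destruct (Rle_lt_or_eq_dec 1 x hr1) as [h|h]; [right; split; [exact h|] | left; lra].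
      unfold qf. assert (H0 := Hqm x h). apply Rmult_lt_reg_r with (s * E x); [nra|].
      replace (ue x / (s * E x) * (s * E x)) with (ue x) by (field; lra). lra. }
    destruct Hpa as [hh ha]. split; [exact hh|].
    assert (Hsys := core s ue E x hs hr1 (HU x hr1) (HE x ltac:(lra)) hU0 hE0).
    destruct Hsys as [_ e2]. fold G in e2. fold Q in e2.
    assert (hW : 0 < Wf s x (ue x) (E x)).
    { unfold Wf. assert (0 < qf s (ue x) (E x)) by (unfold qf; apply Rdiv_lt_0_compat; nra).
      apply Rdiv_lt_0_compat; [|nra]. assert (PI > 0) by apply PI_RGT_0.
      apply Rmult_lt_0_compat; [apply Rmult_lt_0_compat; [apply Rmult_lt_0_compat; lra | lra] | lra]. }
    unfold Q in *. cbv beta in *. rewrite dW_eq in e2 by auto.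
    set (W := Wf s x (ue x) (E x)) in *. set (hh0 := hf s x (ue x) (E x)) in *.
    set (aa := af s x (ue x) (E x)) in *. set (dg0 := qf s (ue x) (E x) * Derive G x) in *.
    assert (e3 : (dg0 + hh0) * W ^ 2 = ((s + 1 - 1) * (5 - (s + 1)) / 4 * hh0 * aa ^ 2) * W ^ 2).
    { replace (((s + 1 - 1) * (5 - (s + 1)) / 4 * hh0 * aa ^ 2) * W ^ 2) with
        ((s + 1 - 1) * (5 - (s + 1)) / 4 * hh0 * (W * aa) ^ 2) by (field; lra). lra. }
    apply Rmult_eq_reg_r in e3; [|apply pow_nonzero; lra].
    cbv beta. fold x. fold dg0. fold hh0. rewrite e3.
    apply Rmult_lt_0_compat; [|apply pow_lt; lra].
    apply Rmult_lt_0_compat; [|lra]. apply Rdiv_lt_0_compat; [nra|lra].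
  - exists (Bg s Eb + Bh s Eb), 1. split; [lra|]. intros r hr.
    assert (hBh : 0 <= Bh s Eb).
    { apply Rle_trans with (Rabs (Ph s 1 0 0)); [apply Rabs_pos|]. apply Ph_bnd.
      - rewrite Rinv_1. lra.
      - rewrite Rabs_R0. apply Rlt_le, Rinv_0_lt_compat; lra.
      - lra. }
    assert (hBg : 0 <= Bg s Eb).
    { apply Rle_trans with (Rabs (Pg s 1 0 0)); [apply Rabs_pos|]. apply Pg_bnd.
      - rewrite Rinv_1. lra.
      - rewrite Rabs_R0. apply Rlt_le, Rinv_0_lt_compat; lra.
      - lra. }
    cbv beta. rewrite Hweq by lra. rewrite Hrw by lra. unfold G.
    assert (hE0 : 0 < E r) by (apply HEpos; lra).
    assert (hql := Hql r hr). assert (hqu := Hqu r hr).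
    set (e := E r * (r * r)).
    set (th := r * (ue r / (s * E r) - r / (2 - s) - 1)).
    assert (HEr : E r = e / (r * r)) by (unfold e; field; lra).
    assert (HUr : ue r = s * (e / (r * r)) * (r / (2 - s) + 1 + th / r)).
    { unfold th, e. field. repeat split; lra. }
    assert (hth : Rabs th <= / s).
    { unfold th. apply Rabs_le. split.
      - assert (s * E r * (r / (2 - s) + 1) / (s * E r) = r / (2 - s) + 1) by (field; lra).
        assert (ue r / (s * E r) > s * E r * (r / (2 - s) + 1) / (s * E r)).
        { apply Rmult_gt_compat_r; [apply Rinv_0_lt_compat; nra | lra]. }
        assert (0 < / s) by (apply Rinv_0_lt_compat; lra). nra.
      - assert (s * E r * (r / (2 - s) + 1 + 1 / (s * r)) / (s * E r) = r / (2 - s) + 1 + 1 / (s * r)) by (field; lra).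
        assert (ue r / (s * E r) < s * E r * (r / (2 - s) + 1 + 1 / (s * r)) / (s * E r)).
        { apply Rmult_lt_compat_r; [apply Rinv_0_lt_compat; nra | lra]. }
        assert (r * (1 / (s * r)) = / s) by (field; lra).
        nra. }
    assert (hrr : 0 <= / r <= 1).
    { split; [apply Rlt_le, Rinv_0_lt_compat; lra|]. rewrite <- Rinv_1. apply Rinv_le_contravar; lra. }
    assert (he : 0 <= e <= Eb) by (split; [unfold e; nra | apply HEx2; lra]).
    assert (he0 : 0 < e) by (unfold e; apply Rmult_lt_0_compat; [lra | apply Rmult_lt_0_compat; lra]).
    rewrite HUr, HEr. split.
    + replace (gf s r (s * (e / (r * r)) * (r / (2 - s) + 1 + th / r)) (e / (r * r)) - (- r - 4 / (3 - (s + 1))))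
        with (gf s r (s * (e / (r * r)) * (r / (2 - s) + 1 + th / r)) (e / (r * r)) + r + 4 / (2 - s)) by (field; lra).
      apply Rle_trans with (Bg s Eb / r).
      * eapply div_bnd; [exact hr | apply g_asym; auto | apply Pg_bnd; auto].
      * unfold Rdiv. apply Rmult_le_compat_r; [apply Rlt_le, Rinv_0_lt_compat; lra | lra].
    + replace (r / (3 - (s + 1)) + 1) with (r / (2 - s) + 1) by (field; lra).
      apply Rle_trans with (Bh s Eb / r).
      * eapply div_bnd; [exact hr | apply h_asym; auto | apply Ph_bnd; auto].
      * unfold Rdiv. apply Rmult_le_compat_r; [apply Rlt_le, Rinv_0_lt_compat; lra | lra].
Qed.
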